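(* For every integer $n\ge 1$, $|\mathfrak D^1_{2n}(1342,4213)|=2^{n-1}$.
   Context: A Dumont permutation of the first kind of length $2n$ is a permutation $\pi\in\mathfrak S_{2n}$ such that for every $i=1,\dots,2n$: if $\pi(i)$ is even then $i<2n$ and $\pi(i)>\pi(i+1)$; if $\pi(i)$ is odd then $i=2n$ or $\pi(i)<\pi(i+1)$. $\mathfrak D^1_{2n}$ denotes the set of these. A permutation $\sigma$ contains a pattern $\tau\in\mathfrak S_k$ if some subsequence $(\sigma(i_1),\dots,\sigma(i_k))$, $i_1<\dots<i_k$, is order-isomorphic to $\tau$; otherwise $\sigma$ avoids $\tau$. $\mathfrak D^1_{2n}(T)$ denotes the set of permutations in $\mathfrak D^1_{2n}$ avoiding every pattern in $T$. *)

(* Defs.v *)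
From mathcomp Require Import all_boot all_fingroup.
Set Implicit Arguments. Unset Strict Implicit. Unset Printing Implicit Defensive.

(* Permutations of {1,...,2n} are represented as s : {perm 'I_(2n)}, with
   positions and values shifted to be 0-based: the 1-based value pi(i+1)
   at 1-based position i+1 is (s i).+1. *)

Definition pval (m : nat) (s : {perm 'I_m}) (i : 'I_m) : nat := (s i).+1.

Definition oneline (m : nat) (s : {perm 'I_m}) : seq nat :=
  [seq pval s j | j <- enum 'I_m].

Definition dumont1 (m : nat) (s : {perm 'I_m}) : bool :=
  [forall i : 'I_m,
     if ~~ odd (pval s i) then
       (i.+1 < m) && (nth 0 (oneline s) i.+1 < pval s i)
     else
       (i.+1 == m) || (pval s i < nth 0 (oneline s) i.+1)].

Definition contains (m : nat) (s : {perm 'I_m}) (tau : seq nat) : bool :=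
  [exists f : {ffun 'I_(size tau) -> 'I_m},
    [forall a : 'I_(size tau), forall b : 'I_(size tau),
       ((a < b)%N ==> (f a < f b)%N) &&
       ((pval s (f a) < pval s (f b))%N == (nth 0 tau a < nth 0 tau b)%N)]].

Definition avoids (m : nat) (s : {perm 'I_m}) (tau : seq nat) : bool :=
  ~~ contains s tau.

Definition dumont1_avoiding (n : nat) (T : seq (seq nat)) : {set {perm 'I_(n.*2)}} :=
  [set s : {perm 'I_(n.*2)} | dumont1 s && all (avoids s) T].

(* Main.v *)
Require Import Defs.
From mathcomp Require Import all_boot all_fingroup zify.
Set Implicit Arguments. Unset Strict Implicit. Unset Printing Implicit Defensive.

Definition dumS (t : seq nat) : Prop := forall i, i < size t ->
  if ~~ odd (nth 0 t i) then (i.+1 < size t) && (nth 0 t i.+1 < nth 0 t i)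
  else (i.+1 == size t) || (nth 0 t i < nth 0 t i.+1).

Definition occA (t : seq nat) : Prop := exists a b c d,
  [/\ a < b, b < c, c < d, d < size t &
   [/\ nth 0 t a < nth 0 t d, nth 0 t d < nth 0 t b & nth 0 t b < nth 0 t c]].
Definition occB (t : seq nat) : Prop := exists a b c d,
  [/\ a < b, b < c, c < d, d < size t &
   [/\ nth 0 t c < nth 0 t b, nth 0 t b < nth 0 t d & nth 0 t d < nth 0 t a]].

Definition good t := [/\ dumS t, ~ occA t & ~ occB t].
Definition permS m (t : seq nat) := [/\ uniq t, size t = m & forall x, x \in t -> 0 < x <= m].

Lemma size_oneline m (s : {perm 'I_m}) : size (oneline s) = m.
Proof. by rewrite /oneline size_map size_enum_ord. Qed.

Lemma nth_oneline m (s : {perm 'I_m}) (i : 'I_m) : nth 0 (oneline s) i = Defs.pval s i.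
Proof.
rewrite /oneline (nth_map i); last by rewrite size_enum_ord.
by rewrite nth_ord_enum.
Qed.

Lemma oneline_inj m : injective (@oneline m).
Proof.
move=> s1 s2 E; apply/permP => i.
have := nth_oneline s1 i; rewrite E nth_oneline /Defs.pval => -[] E2.
by apply: val_inj.
Qed.

Lemma permS_oneline m (s : {perm 'I_m}) : permS m (oneline s).
Proof.
split; last first.
- move=> x /mapP [i _ ->]; rewrite /Defs.pval /=; exact: ltn_ord.
- exact: size_oneline.
rewrite /oneline map_inj_uniq ?enum_uniq // => i j [] /val_inj.
exact: perm_inj.
Qed.

Lemma oneline_surj m t : permS m t -> exists s : {perm 'I_m}, oneline s = t.
Proof.
case=> ut st bt.
have H (i : 'I_m) : (nth 0 t i).-1 < m.
  have : nth 0 t i \in t by apply: mem_nth; rewrite st.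
  by move/bt; lia.
pose f (i : 'I_m) := Ordinal (H i).
have fi : injective f.
  move=> i j [] E.
  have ti : nth 0 t i \in t by apply: mem_nth; rewrite st.
  have tj : nth 0 t j \in t by apply: mem_nth; rewrite st.
  move: (bt _ ti) (bt _ tj) => bi bj.
  have : nth 0 t i = nth 0 t j by lia.
  move/eqP; rewrite nth_uniq ?st // => /eqP; exact: val_inj.
exists (perm fi).
apply: (@eq_from_nth _ 0); first by rewrite size_oneline st.
move=> i; rewrite size_oneline => im.
have := nth_oneline (perm fi) (Ordinal im); rewrite /= => ->.
rewrite /Defs.pval permE /=.
have : nth 0 t i \in t by apply: mem_nth; rewrite st.
by move/bt; lia.
Qed.

Lemma dumont1E m (s : {perm 'I_m}) : dumont1 s <-> dumS (oneline s).
Proof.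
rewrite /dumont1 /dumS size_oneline; split.
- move=> /forallP H i im; have := H (Ordinal im); by rewrite -nth_oneline.
- move=> H; apply/forallP => i; have := H i (ltn_ord i); by rewrite nth_oneline.
Qed.

Lemma contains4 m (s : {perm 'I_m}) (t0 t1 t2 t3 : nat) :
  contains s [:: t0; t1; t2; t3] <-> exists a b c d, [/\ a < b, b < c, c < d, d < m &
    forall (x y : nat), x < 4 -> y < 4 ->
     (nth 0 (oneline s) (nth 0 [:: a; b; c; d] x) < nth 0 (oneline s) (nth 0 [:: a; b; c; d] y))
       = (nth 0 [:: t0; t1; t2; t3] x < nth 0 [:: t0; t1; t2; t3] y)].
Proof.
rewrite /contains; split.
- case/existsP => f /forallP H.
  have H' (a b : 'I_4) : ((a < b) ==> (f a < f b)) &&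
      ((Defs.pval s (f a) < Defs.pval s (f b)) == (nth 0 [:: t0; t1; t2; t3] a < nth 0 [:: t0; t1; t2; t3] b)).
    by move: (H a) => /forallP /(_ b).
  exists (f (@Ordinal 4 0 isT)), (f (@Ordinal 4 1 isT)), (f (@Ordinal 4 2 isT)), (f (@Ordinal 4 3 isT)).
  split.
  + by have /andP[/implyP hh _] := H' (@Ordinal 4 0 isT) (@Ordinal 4 1 isT); exact: hh.
  + by have /andP[/implyP hh _] := H' (@Ordinal 4 1 isT) (@Ordinal 4 2 isT); exact: hh.
  + by have /andP[/implyP hh _] := H' (@Ordinal 4 2 isT) (@Ordinal 4 3 isT); exact: hh.
  + exact: ltn_ord.
  move=> x y hx hy.
  have E (z : nat) (hz : z < 4) : nth 0 [:: f (@Ordinal 4 0 isT) : nat; f (@Ordinal 4 1 isT) : nat; f (@Ordinal 4 2 isT) : nat; f (@Ordinal 4 3 isT) : nat] z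
     = f (Ordinal hz).
    by case: z hz => [|[|[|[|]]]] //= hz; congr (nat_of_ord (f _)); apply: val_inj.
  rewrite (E x hx) (E y hy) !nth_oneline.
  by have /andP[_ /eqP] := H' (Ordinal hx) (Ordinal hy).
- case=> a [b] [c] [d] [ab bc cd dm H].
  have am : a < m by lia. have bm : b < m by lia. have cm : c < m by lia.
  apply/existsP; exists [ffun k : 'I_4 => nth (Ordinal dm) [:: Ordinal am; Ordinal bm; Ordinal cm; Ordinal dm] k].
  apply/forallP => x; apply/forallP => y; rewrite !ffunE.
  have E (z : 'I_4) : nth (Ordinal dm) [:: Ordinal am; Ordinal bm; Ordinal cm; Ordinal dm] z = nth 0 [:: a; b; c; d] z :> nat.
    by case: z => [[|[|[|[|]]]]].
  apply/andP; split.
  + rewrite !E; apply/implyP.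
    by case: x => [[|[|[|[|]]]]] //= _; case: y => [[|[|[|[|]]]]] //=; lia.
  + rewrite -!nth_oneline !E; apply/eqP; apply: H; exact: ltn_ord.
Qed.

Lemma containsA m (s : {perm 'I_m}) : contains s [:: 1; 3; 4; 2] <-> occA (oneline s).
Proof.
rewrite contains4 /occA size_oneline; split.
- case=> a [b] [c] [d] [ab bc cd dm H]; exists a, b, c, d; split => //; split.
  + by rewrite (H 0 3 isT isT).
  + by rewrite (H 3 1 isT isT).
  + by rewrite (H 1 2 isT isT).
- case=> a [b] [c] [d] [ab bc cd dm [h1 h2 h3]]; exists a, b, c, d; split => //.
  move=> x y; case: x => [|[|[|[|x]]]] //= _; case: y => [|[|[|[|y]]]] //= _; apply/idP/idP; lia.
Qed.

Lemma containsB m (s : {perm 'I_m}) : contains s [:: 4; 2; 1; 3] <-> occB (oneline s).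
Proof.
rewrite contains4 /occB size_oneline; split.
- case=> a [b] [c] [d] [ab bc cd dm H]; exists a, b, c, d; split => //; split.
  + by rewrite (H 2 1 isT isT).
  + by rewrite (H 1 3 isT isT).
  + by rewrite (H 3 0 isT isT).
- case=> a [b] [c] [d] [ab bc cd dm [h1 h2 h3]]; exists a, b, c, d; split => //.
  move=> x y; case: x => [|[|[|[|x]]]] //= _; case: y => [|[|[|[|y]]]] //= _; apply/idP/idP; lia.
Qed.

Lemma oddM x : odd x = (x %% 2 == 1).
Proof. by rewrite modn2; case: (odd x). Qed.

Definition top (x : nat) := if odd x then x.+1 else x.
Definition sh (P y : nat) := if y < P.-1 then y else y.+2.
Definition ush (P y : nat) := if y <= P then y else y - 2.
Definition extA (s : seq nat) := let P := top (head 0 s) in [:: P; P.-1] ++ map (sh P) s.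
Definition extB (s : seq nat) := let P := (top (head 0 s)).+2 in [:: P.-1; P] ++ map (sh P) s.
Fixpoint L (n : nat) : seq (seq nat) :=
  match n with 0 => [::]
  | n1.+1 => if n1 is 0 then [:: [:: 2; 1]]
             else flatten [seq [:: extA s; extB s] | s <- L n1] end.

Definition isA (t : seq nat) a b c d :=
  [/\ a < b, b < c, c < d, d < size t &
   [/\ nth 0 t a < nth 0 t d, nth 0 t d < nth 0 t b & nth 0 t b < nth 0 t c]].
Definition isB (t : seq nat) a b c d :=
  [/\ a < b, b < c, c < d, d < size t &
   [/\ nth 0 t c < nth 0 t b, nth 0 t b < nth 0 t d & nth 0 t d < nth 0 t a]].

Lemma sh_lt P a b : (sh P a < sh P b) = (a < b).
Proof. rewrite /sh; case: ifP; case: ifP => H1 H2; apply/idP/idP; lia. Qed.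
Lemma sh_inj P : injective (sh P).
Proof. move=> a b; rewrite /sh; case: ifP; case: ifP => H1 H2; lia. Qed.
Lemma odd_sh P a : odd (sh P a) = odd a.
Proof. by rewrite /sh; case: ifP => // _; rewrite /= negbK. Qed.
Lemma sh_range P a : (sh P a < P.-1) || (P < sh P a).
Proof. rewrite /sh; case: ifP => H; lia. Qed.
Lemma sh_ush P a : 0 < P -> a != P.-1 -> a != P -> sh P (ush P a) = a.
Proof. move=> P0 h1 h2; rewrite /ush; case: leqP => H1; rewrite /sh; case: ifP => H2; lia. Qed.

Lemma nth_sh x y P s i : i < size s ->
  nth 0 (x :: y :: map (sh P) s) i.+2 = sh P (nth 0 s i).
Proof. by move=> h; rewrite /= (nth_map 0). Qed.

Lemma size_t x y P s : size (x :: y :: map (sh P) s) = (size s).+2.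
Proof. by rewrite /= size_map. Qed.

Lemma isA_tail x y P s a b c d : isA s a b c d -> isA (x :: y :: map (sh P) s) a.+2 b.+2 c.+2 d.+2.
Proof.
case=> ab bc cd ds [h1 h2 h3]; rewrite /isA size_t !nth_sh; try lia.
by rewrite !sh_lt; split.
Qed.
Lemma isB_tail x y P s a b c d : isB s a b c d -> isB (x :: y :: map (sh P) s) a.+2 b.+2 c.+2 d.+2.
Proof.
case=> ab bc cd ds [h1 h2 h3]; rewrite /isB size_t !nth_sh; try lia.
by rewrite !sh_lt; split.
Qed.
Lemma isA_lift x y P s a b c d : isA (x :: y :: map (sh P) s) a.+2 b.+2 c.+2 d.+2 -> isA s a b c d.
Proof.
case=> ab bc cd; rewrite size_t => ds.
rewrite !nth_sh; try lia. rewrite !sh_lt => -[h1 h2 h3]; split => //; lia.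
Qed.
Lemma isA_lift2 x y P s a b c d : 1 < a -> isA (x :: y :: map (sh P) s) a b c d -> exists a' b' c' d', isA s a' b' c' d'.
Proof.
move=> a1 H; exists (a-2), (b-2), (c-2), (d-2); apply: (isA_lift (x:=x) (y:=y) (P:=P)).
case: H => ab bc cd ds.
have ea : (a-2).+2 = a by lia. have eb : (b-2).+2 = b by lia.
have ec : (c-2).+2 = c by lia. have ed : (d-2).+2 = d by lia.
by rewrite ea eb ec ed.
Qed.
Lemma isB_lift x y P s a b c d : isB (x :: y :: map (sh P) s) a.+2 b.+2 c.+2 d.+2 -> isB s a b c d.
Proof.
case=> ab bc cd; rewrite size_t => ds.
rewrite !nth_sh; try lia. rewrite !sh_lt => -[h1 h2 h3]; split => //; lia.
Qed.
Lemma isB_lift2 x y P s a b c d : 1 < a -> isB (x :: y :: map (sh P) s) a b c d -> exists a' b' c' d', isB s a' b' c' d'.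
Proof.
move=> a1 H; exists (a-2), (b-2), (c-2), (d-2); apply: (isB_lift (x:=x) (y:=y) (P:=P)).
case: H => ab bc cd ds.
have ea : (a-2).+2 = a by lia. have eb : (b-2).+2 = b by lia.
have ec : (c-2).+2 = c by lia. have ed : (d-2).+2 = d by lia.
by rewrite ea eb ec ed.
Qed.

Lemma occA_isA t : occA t <-> exists a b c d, isA t a b c d.
Proof. by []. Qed.
Lemma occB_isB t : occB t <-> exists a b c d, isB t a b c d.
Proof. by []. Qed.

Lemma dumE t i : dumS t -> i < size t -> ~~ odd (nth 0 t i) ->
  i.+1 < size t /\ nth 0 t i.+1 < nth 0 t i.
Proof. by move=> D it o; move: (D i it); rewrite o => /andP. Qed.
Lemma dumO t i : dumS t -> i.+1 < size t -> odd (nth 0 t i) ->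
  nth 0 t i < nth 0 t i.+1.
Proof.
move=> D it o; have : i < size t by lia.
move/D; rewrite o /= => /orP [/eqP|] //; lia.
Qed.

Lemma dum_tail x y P s : dumS (x :: y :: map (sh P) s) -> dumS s.
Proof.
move=> D i hi; have := D i.+2; rewrite size_t nth_sh // odd_sh.
case: (ltnP i.+1 (size s)) => h.
  rewrite nth_sh // !sh_lt; move/(_ ltac:(lia)).
  case: (odd _) => /=; lia.
have e : i.+1 = size s by lia.
have n1 : nth 0 s i.+1 = 0 by apply: nth_default; lia.
have n2 : nth 0 (x :: y :: map (sh P) s) i.+3 = 0 by apply: nth_default; rewrite size_t; lia.
rewrite n1 n2; move/(_ ltac:(lia)).
case: (odd _) => /=; lia.
Qed.

Lemma dum_ext x y P s : dumS s -> 0 < size s ->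
  (if ~~ odd x then y < x else x < y) ->
  (if ~~ odd y then sh P (head 0 s) < y else y < sh P (head 0 s)) ->
  dumS (x :: y :: map (sh P) s).
Proof.
move=> D s0 h0 h1 [|[|i]]; rewrite size_t => ip.
{ move: h0; clear h1 D; rewrite /=; case: (odd x) => /=; lia. }
{ move: h1; rewrite /= (nth_map 0) //; clear h0 ip; case: s s0 D => //= z s _ _.
  all: case: (odd y) => /=; lia. }
have hi : i < size s by lia.
have := D i hi; rewrite nth_sh // odd_sh; clear h0 h1.
case: (ltnP i.+1 (size s)) => h.
  rewrite nth_sh // !sh_lt; case: (odd _) => /=; lia.
have n1 : nth 0 s i.+1 = 0 by apply: nth_default; lia.
have n2 : nth 0 (x :: y :: map (sh P) s) i.+3 = 0 by apply: nth_default; rewrite size_t; lia.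
rewrite n1 n2; case: (odd _) => /=; lia.
Qed.

Definition pc (x y P : nat) := ((x == P.-1) && (y == P)) || ((x == P) && (y == P.-1)).

Lemma permS_tail m x y P s : permS m.+2 (x :: y :: map (sh P) s) -> pc x y P -> permS m s.
Proof.
case=> u; rewrite size_t => -[sm] B hp; split => //.
- by move: u => /= /andP [_ /andP [_]]; rewrite (map_inj_uniq (@sh_inj P)).
- move=> w ws.
  have hx := B x (mem_head _ _).
  have hy : 0 < y <= m.+2 by apply: B; rewrite !inE eqxx orbT.
  have := B (sh P w); rewrite !inE (map_f (sh P) ws) !orbT => /(_ isT).
  move: hp; rewrite /pc /sh; case: ifP => h; lia.
Qed.

Lemma permS_ext m x y P s : permS m s -> 1 < P -> P <= m.+2 -> pc x y P -> permS m.+2 (x :: y :: map (sh P) s).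
Proof.
case=> u sm B P1 Pm hp; split; last first.
- move=> w; rewrite !inE => /orP [/eqP ->|/orP [/eqP ->|/mapP [z zs ->]]].
  + move: hp; rewrite /pc; lia.
  + move: hp; rewrite /pc; lia.
  + have := B z zs; rewrite /sh; case: ifP => h; lia.
- by rewrite size_t sm.
rewrite /= (map_inj_uniq (@sh_inj P)).
rewrite u andbT !inE; apply/andP; split.
- apply/orP => -[/eqP e|]; first by move: hp; rewrite /pc; lia.
  move/mapP => [z _ e]; have := sh_range P z; rewrite -e; move: hp; rewrite /pc; lia.
- apply/mapP => -[z _ e]; have := sh_range P z; rewrite -e; move: hp; rewrite /pc; lia.
Qed.

Lemma val_in m t v : permS m t -> 0 < v <= m -> exists2 q, q < m & nth 0 t q = v.
Proof.
case=> u st B vm.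
have sub : {subset t <= iota 1 m} by move=> z /B zm; rewrite mem_iota; lia.
have [_ E] := uniq_min_size u sub (eq_leq (etrans (size_iota 1 m) (esym st))).
have : v \in t by rewrite E mem_iota; lia.
move=> vt; exists (index v t); first by rewrite -st index_mem.
exact: nth_index.
Qed.

Lemma nth_inj m t p q : permS m t -> p < m -> q < m -> nth 0 t p = nth 0 t q -> p = q.
Proof. case=> u st _ pm qm /eqP; rewrite nth_uniq ?st //; exact/eqP. Qed.

Lemma nth_bnd m t p : permS m t -> p < m -> 0 < nth 0 t p <= m.
Proof. case=> u st B pm; apply: B; apply: mem_nth; by rewrite st. Qed.

Definition FL (l : seq (seq nat)) := flatten [seq [:: extA s; extB s] | s <- l].

Lemma FL_mem l t : t \in FL l <-> exists2 s, s \in l & (t = extA s \/ t = extB s).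
Proof.
elim: l t => [|s l IH] t /=; first by split => // -[].
rewrite /FL /= !inE -/(FL l); split.
- case/orP => [/eqP ->|/orP [/eqP ->|H]].
  + by exists s; rewrite ?mem_head //; left.
  + by exists s; rewrite ?mem_head //; right.
  + by have [s' s'l h] := proj1 (IH t) H; exists s'; rewrite // inE s'l orbT.
- case=> s'; rewrite inE => /orP [/eqP ->|s'l] [->|->]; rewrite ?eqxx ?orbT //.
  + by apply/orP; right; apply/orP; right; apply: (proj2 (IH _)); exists s' => //; left.
  + by apply/orP; right; apply/orP; right; apply: (proj2 (IH _)); exists s' => //; right.
Qed.

Lemma size_FL l : size (FL l) = (size l).*2.
Proof. by elim: l => //= s l IH; rewrite /FL /= -/(FL l) IH doubleS. Qed.

Lemma top_even x : odd (top x) = false.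
Proof. rewrite /top; case: ifP => h //=; by rewrite h. Qed.

Lemma extA_inj s s' : extA s = extA s' -> s = s'.
Proof.
rewrite /extA /= => -[e _]; rewrite e => /(inj_map (@sh_inj _)); done.
Qed.
Lemma extB_inj s s' : extB s = extB s' -> s = s'.
Proof.
rewrite /extB /= => -[_ e]; rewrite e => /(inj_map (@sh_inj _)); done.
Qed.
Lemma extAB s s' : extA s <> extB s'.
Proof.
rewrite /extA /extB /= => -[e _].
have := top_even (head 0 s); have := top_even (head 0 s'); rewrite e !oddM; lia.
Qed.

Lemma uniq_FL l : uniq l -> uniq (FL l).
Proof.
elim: l => [|s l IH] //= /andP [sl ul].
rewrite /FL /= -/(FL l) IH // andbT !inE; apply/andP; split.
- apply/orP => -[/eqP /extAB //|/FL_mem [s' s'l [/extA_inj e|/extAB //]]].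
  by move: sl; rewrite e s'l.
- apply/negP => /FL_mem [s' s'l [/esym /extAB //|/extB_inj e]].
  by move: sl; rewrite e s'l.
Qed.

Lemma L_S n : L n.+2 = FL (L n.+1).
Proof. by []. Qed.

Lemma size_L n : size (L n.+1) = 2 ^ n.
Proof. elim: n => // n IH; by rewrite L_S size_FL IH expnS mul2n. Qed.

Lemma uniq_L n : uniq (L n.+1).
Proof. elim: n => // n IH; by rewrite L_S uniq_FL. Qed.

Definition partner (t : seq nat) :=
  nth 0 t 1 = if odd (nth 0 t 0) then (nth 0 t 0).+1 else (nth 0 t 0).-1.

Lemma L_prop n t : t \in L n.+1 -> permS (n.+1).*2 t /\ partner t.
Proof.
elim: n t => [|n IH] t.
  rewrite inE => /eqP ->; split => //; split => // x; rewrite !inE => /orP [] /eqP -> //.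
rewrite L_S => /FL_mem [s /IH [ps pts] [->|->]].
- have s0 : 0 < size s by case: ps => _ -> _; lia.
  have h0 := nth_bnd (p:=0) ps isT.
  have ho := top_even (head 0 s).
  split; last by rewrite /partner /extA /= ho.
  rewrite doubleS; apply: permS_ext ps _ _ _.
  + move: h0 ho; rewrite /top -nth0 !oddM; case: ifP; lia.
  + move: h0 ho; rewrite /top -nth0 !oddM; case: ifP; lia.
  + by rewrite /pc !eqxx orbT.
- have s0 : 0 < size s by case: ps => _ -> _; lia.
  have h0 := nth_bnd (p:=0) ps isT.
  have ho := top_even (head 0 s).
  split.
    rewrite doubleS; apply: permS_ext ps _ _ _.
    + move: h0 ho; rewrite /top -nth0 !oddM; case: ifP; lia.
    + move: h0 ho; rewrite /top -nth0 !oddM; case: ifP; lia.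
    + by rewrite /pc !eqxx.
  by rewrite /partner /extB /= ho.
Qed.

Lemma nth_sh2 x y P s d : 1 < d -> d < (size s).+2 ->
  nth 0 (x :: y :: map (sh P) s) d = sh P (nth 0 s (d-2)).
Proof. case: d => [|[|d]] // _ h; have -> : d.+2 - 2 = d by lia. rewrite nth_sh //; lia. Qed.

Lemma sh_cases P w : (w < P.-1 /\ sh P w = w) \/ (P.-1 <= w /\ sh P w = w.+2).
Proof. rewrite /sh; case: ifP => h; [left|right]; lia. Qed.

Lemma nth01 x y r : nth 0 (x :: y :: r) 0 = x /\ nth 0 (x :: y :: r) 1 = y.
Proof. by []. Qed.

Lemma goodA s m : permS m s -> 1 < m -> partner s -> good s -> good (extA s).
Proof.
move=> ps m1 pt [Ds nA nB].
have sm : size s = m by case: ps.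
have hb := nth_bnd (p:=0) ps (ltnW m1).
have far k : 1 < k -> k < m -> nth 0 s k <> nth 0 s 0 /\ nth 0 s k <> nth 0 s 1.
  move=> k1 km; split => /(nth_inj ps) e; [have := e km | have := e km]; lia.
rewrite /extA /= -nth0.
set h := nth 0 s 0 in hb far pt *; set P := top h.
have F : (P = h.+1 /\ nth 0 s 1 = h.+1 /\ odd h) \/ (P = h /\ nth 0 s 1 = h.-1 /\ ~~ odd h).
  rewrite /P /top; move: pt; rewrite /partner -/h; case: ifP => o ->; [left|right]; by rewrite ?o.
have Pe : ~~ odd P by rewrite /P top_even.
move: F Pe; rewrite !oddM => F Pe.
split.
- apply: dum_ext; [exact: Ds | lia | |].
  + rewrite /= oddM; case: ifP => HH; lia.
  + rewrite -nth0 -/h oddM; have := sh_cases P h; case: ifP => HH; lia.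
- move=> [a [b [c [d H]]]].
  have [a2|a1] := leqP 2 a; first by apply: nA; exact: isA_lift2 a2 H.
  case: H => ab bc cd; rewrite size_t => dm [h1 h2 h3].
  have ea : nth 0 [:: P, P.-1 & map (sh P) s] a = P \/ nth 0 [:: P, P.-1 & map (sh P) s] a = P.-1.
    by case: a {ab h1 h2 h3} a1 => [|[|]] //=; [left|right].
  have [b1|b2] := leqP b 1.
    have a0 : a = 0 by lia.
    have eb : b = 1 by lia.
    move: h1 h2; rewrite a0 eb /=; lia.
  have ed : nth 0 (P :: P.-1 :: map (sh P) s) d = sh P (nth 0 s (d-2)) by apply: nth_sh2; lia.
  have e2 : nth 0 (P :: P.-1 :: map (sh P) s) 2 = sh P h by rewrite /= (nth_map 0) -?nth0 //; lia.
  have [fd1 fd2] := far (d-2) ltac:(lia) ltac:(lia).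
  have X1 := sh_cases P (nth 0 s (d - 2)); have X2 := sh_cases P h.
  have [eb|b3] := eqVneq b 2.
    by move: h1 h2; rewrite eb e2 ed; lia.
  apply: nA; apply: (isA_lift2 (a:=2) isT (x:=P) (y:=P.-1) (P:=P) (c:=c) (d:=d) (b:=b)).
  split; [lia|lia|lia|rewrite size_t; lia|split].
  + rewrite e2 ed; move: h1; rewrite ed; lia.
  + exact: h2.
  + exact: h3.
- move=> [a [b [c [d H]]]].
  have [a2|a1] := leqP 2 a; first by apply: nB; exact: isB_lift2 a2 H.
  case: H => ab bc cd; rewrite size_t => dm [h1 h2 h3].
  have ea : nth 0 [:: P, P.-1 & map (sh P) s] a = P \/ nth 0 [:: P, P.-1 & map (sh P) s] a = P.-1.
    by case: a {ab h1 h2 h3} a1 => [|[|]] //=; [left|right].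
  have [b1|b2] := leqP b 1.
    have a0 : a = 0 by lia.
    have eb : b = 1 by lia.
    move: h2 h3; rewrite a0 eb /=; lia.
  have ed : nth 0 (P :: P.-1 :: map (sh P) s) d = sh P (nth 0 s (d-2)) by apply: nth_sh2; lia.
  have e2 : nth 0 (P :: P.-1 :: map (sh P) s) 2 = sh P h by rewrite /= (nth_map 0) -?nth0 //; lia.
  have X1 := sh_cases P (nth 0 s (d - 2)); have X2 := sh_cases P h.
  have [eb|b3] := eqVneq b 2.
    by move: h2 h3; rewrite eb e2 ed; lia.
  apply: nB; apply: (isB_lift2 (a:=2) isT (x:=P) (y:=P.-1) (P:=P) (c:=c) (d:=d) (b:=b)).
  split; [lia|lia|lia|rewrite size_t; lia|split].
  + exact: h1.
  + exact: h2.
  + rewrite e2 ed; move: h3; rewrite ed; lia.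
Qed.

Lemma extB_eq s P : P = (top (head 0 s)).+2 -> extB s = P.-1 :: P :: map (sh P) s.
Proof. by move=> ->. Qed.

Lemma goodB s m : permS m s -> 1 < m -> partner s -> good s -> good (extB s).
Proof.
move=> ps m1 pt [Ds nA nB].
have sm : size s = m by case: ps.
have hb := nth_bnd (p:=0) ps (ltnW m1).
have far k : 1 < k -> k < m -> nth 0 s k <> nth 0 s 0 /\ nth 0 s k <> nth 0 s 1.
  move=> k1 km; split => /(nth_inj ps) e; [have := e km | have := e km]; lia.
rewrite (@extB_eq s ((top (nth 0 s 0)).+2)) ?nth0 //.
set h := nth 0 s 0 in hb far pt *; set P := (top h).+2.
have F : (P = h.+3 /\ nth 0 s 1 = h.+1 /\ odd h) \/ (P = h.+2 /\ nth 0 s 1 = h.-1 /\ ~~ odd h).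
  rewrite /P /top; move: pt; rewrite /partner -/h; case: ifP => o ->; [left|right]; by rewrite ?o.
have Pe : ~~ odd P by rewrite /P /= top_even.
move: F Pe; rewrite !oddM => F Pe.
split.
- apply: dum_ext; [exact: Ds | lia | |].
  + rewrite /= oddM; case: ifP => HH; lia.
  + rewrite -nth0 -/h oddM; have := sh_cases P h; case: ifP => HH; lia.
- move=> [a [b [c [d H]]]].
  have [a2|a1] := leqP 2 a; first by apply: nA; exact: isA_lift2 a2 H.
  case: H => ab bc cd; rewrite size_t => dm [h1 h2 h3].
  have ea : nth 0 [:: P.-1, P & map (sh P) s] a = P.-1 \/ nth 0 [:: P.-1, P & map (sh P) s] a = P.
    by case: a {ab h1 h2 h3} a1 => [|[|]] //=; [left|right].
  have [b1|b2] := leqP b 1.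
    have a0 : a = 0 by lia.
    have eb : b = 1 by lia.
    move: h1 h2; rewrite a0 eb /=; lia.
  have ed : nth 0 (P.-1 :: P :: map (sh P) s) d = sh P (nth 0 s (d-2)) by apply: nth_sh2; lia.
  have e2 : nth 0 (P.-1 :: P :: map (sh P) s) 2 = sh P h by rewrite /= (nth_map 0) -?nth0 //; lia.
  have [fd1 fd2] := far (d-2) ltac:(lia) ltac:(lia).
  have X1 := sh_cases P (nth 0 s (d - 2)); have X2 := sh_cases P h.
  have [eb|b3] := eqVneq b 2.
    by move: h1 h2; rewrite eb e2 ed; lia.
  apply: nA; apply: (isA_lift2 (a:=2) isT (x:=P.-1) (y:=P) (P:=P) (c:=c) (d:=d) (b:=b)).
  split; [lia|lia|lia|rewrite size_t; lia|split].
  + rewrite e2 ed; move: h1; rewrite ed; lia.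
  + exact: h2.
  + exact: h3.
- move=> [a [b [c [d H]]]].
  have [a2|a1] := leqP 2 a; first by apply: nB; exact: isB_lift2 a2 H.
  case: H => ab bc cd; rewrite size_t => dm [h1 h2 h3].
  have ea : nth 0 [:: P.-1, P & map (sh P) s] a = P.-1 \/ nth 0 [:: P.-1, P & map (sh P) s] a = P.
    by case: a {ab h1 h2 h3} a1 => [|[|]] //=; [left|right].
  have [b1|b2] := leqP b 1.
    have a0 : a = 0 by lia.
    have eb : b = 1 by lia.
    move: h2 h3; rewrite a0 eb /=; lia.
  have ed : nth 0 (P.-1 :: P :: map (sh P) s) d = sh P (nth 0 s (d-2)) by apply: nth_sh2; lia.
  have e2 : nth 0 (P.-1 :: P :: map (sh P) s) 2 = sh P h by rewrite /= (nth_map 0) -?nth0 //; lia.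
  have [fd1 fd2] := far (d-2) ltac:(lia) ltac:(lia).
  have X1 := sh_cases P (nth 0 s (d - 2)); have X2 := sh_cases P h.
  have [eb|b3] := eqVneq b 2.
    by move: h2 h3; rewrite eb e2 ed; lia.
  apply: nB; apply: (isB_lift2 (a:=2) isT (x:=P.-1) (y:=P) (P:=P) (c:=c) (d:=d) (b:=b)).
  split; [lia|lia|lia|rewrite size_t; lia|split].
  + exact: h1.
  + exact: h2.
  + rewrite e2 ed; move: h3; rewrite ed; lia.
Qed.

Lemma pos_ne (t : seq nat) p q : nth 0 t p != nth 0 t q -> p != q.
Proof. by apply: contra => /eqP ->. Qed.

Lemma L1 m t : permS m t -> 3 < m -> good t -> partner t.
Proof.
move=> ps m3 [D nA nB].
have sm : size t = m by case: ps.
have bnd p : p < m -> 0 < nth 0 t p <= m by move=> pm; exact: nth_bnd ps pm.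
have inj p q : p < m -> q < m -> nth 0 t p = nth 0 t q -> p = q.
  by move=> pm qm; apply: nth_inj ps pm qm.
have b0 := bnd 0 ltac:(lia); have b1 := bnd 1 ltac:(lia).
have n01 : nth 0 t 0 != nth 0 t 1 by apply/eqP => /inj; lia.
rewrite /partner.
case: (boolP (odd (nth 0 t 0))) => o0.
- have d0 : nth 0 t 0 < nth 0 t 1 by apply: dumO => //; lia.
  case: (eqVneq (nth 0 t 1) (nth 0 t 0).+1) => // ne; exfalso.
  case: (boolP (odd (nth 0 t 1))) => o1.
  + have d1 : nth 0 t 1 < nth 0 t 2 by apply: dumO => //; lia.
    have [q qm hq] := val_in (v := (nth 0 t 0).+1) ps ltac:(lia).
    have q0 := pos_ne (t:=t) (p:=q) (q:=0) ltac:(lia).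
    have q1 := pos_ne (t:=t) (p:=q) (q:=1) ltac:(lia).
    have q2 := pos_ne (t:=t) (p:=q) (q:=2) ltac:(lia).
    apply: nA; exists 0, 1, 2, q; split; try lia; split; lia.
  + have [r rm hr] := val_in (v := (nth 0 t 1).-1) ps ltac:(lia).
    have [q qm hq] := val_in (v := (nth 0 t 0).+1) ps ltac:(move: o0 o1; rewrite !oddM; lia).
    have r0 := pos_ne (t:=t) (p:=r) (q:=0) ltac:(move: o0 o1; rewrite !oddM; lia).
    have r1 := pos_ne (t:=t) (p:=r) (q:=1) ltac:(lia).
    have q0 := pos_ne (t:=t) (p:=q) (q:=0) ltac:(lia).
    have q1 := pos_ne (t:=t) (p:=q) (q:=1) ltac:(lia).
    have qr := pos_ne (t:=t) (p:=q) (q:=r) ltac:(move: o0 o1; rewrite !oddM; lia).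
    have [dq1 dq2] : q.+1 < m /\ nth 0 t q.+1 < nth 0 t q.
      by rewrite -sm; apply: dumE; rewrite ?sm // hq oddM; move: o0; rewrite oddM; lia.
    have dq3 : nth 0 t q.+1 != nth 0 t 0 by apply/eqP => /inj; lia.
    have qr1 := pos_ne (t:=t) (p:=q.+1) (q:=r) ltac:(move: o0 o1; rewrite !oddM; lia).
    case: (ltnP r q) => rq.
    * have dr : nth 0 t r < nth 0 t r.+1.
        by apply: (dumO D); [rewrite sm; lia | rewrite hr oddM; move: o1; rewrite oddM; lia].
      have dr2 : nth 0 t r.+1 != nth 0 t 1 by apply/eqP => /inj; lia.
      have rq1 := pos_ne (t:=t) (p:=r.+1) (q:=q) ltac:(move: o0 o1; rewrite !oddM; lia).
      apply: nA; exists 0, 1, r.+1, q; split; try lia; split; lia.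
    * apply: nB; exists 1, q, q.+1, r; split; try lia; split; move: o0 o1; rewrite !oddM; lia.
- have [d1 d0] : 1 < size t /\ nth 0 t 1 < nth 0 t 0 by apply: dumE => //; lia.
  case: (eqVneq (nth 0 t 1) (nth 0 t 0).-1) => // ne; exfalso.
  case: (boolP (odd (nth 0 t 1))) => o1; last first.
  + have [_ d2] : 2 < size t /\ nth 0 t 2 < nth 0 t 1 by apply: dumE => //; lia.
    have [q qm hq] := val_in (v := (nth 0 t 0).-1) ps ltac:(move: o0 o1; rewrite !oddM; lia).
    have q0 := pos_ne (t:=t) (p:=q) (q:=0) ltac:(lia).
    have q1 := pos_ne (t:=t) (p:=q) (q:=1) ltac:(lia).
    have q2 := pos_ne (t:=t) (p:=q) (q:=2) ltac:(lia).
    apply: nB; exists 0, 1, 2, q; split; try lia; split; lia.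
  + have [r rm hr] := val_in (v := (nth 0 t 1).+1) ps ltac:(lia).
    have [q qm hq] := val_in (v := (nth 0 t 0).-1) ps ltac:(move: o0 o1; rewrite !oddM; lia).
    have r0 := pos_ne (t:=t) (p:=r) (q:=0) ltac:(move: o0 o1; rewrite !oddM; lia).
    have r1 := pos_ne (t:=t) (p:=r) (q:=1) ltac:(lia).
    have q0 := pos_ne (t:=t) (p:=q) (q:=0) ltac:(move: o0 o1; rewrite !oddM; lia).
    have q1 := pos_ne (t:=t) (p:=q) (q:=1) ltac:(lia).
    have qr := pos_ne (t:=t) (p:=q) (q:=r) ltac:(move: o0 o1; rewrite !oddM; lia).
    have [dr1 dr2] : r.+1 < m /\ nth 0 t r.+1 < nth 0 t r.
      by rewrite -sm; apply: dumE; rewrite ?sm // hr oddM; move: o1; rewrite oddM; lia.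
    have dr3 : nth 0 t r.+1 != nth 0 t 1 by apply/eqP => /inj; lia.
    have qr1 := pos_ne (t:=t) (p:=q) (q:=r.+1) ltac:(move: o0 o1; rewrite !oddM; lia).
    case: (ltnP r q) => rq.
    * apply: nB; exists 0, 1, r.+1, q; split; try lia; split; move: o0 o1; rewrite !oddM; lia.
    * have dq : nth 0 t q < nth 0 t q.+1.
        by apply: (dumO D); [rewrite sm; lia | rewrite hq oddM; move: o0; rewrite oddM; lia].
      have dq2 : nth 0 t q.+1 != nth 0 t 0 by apply/eqP => /inj; lia.
      have rq1 := pos_ne (t:=t) (p:=q.+1) (q:=r) ltac:(move: o0 o1; rewrite !oddM; lia).
      apply: nA; exists 1, q, q.+1, r; split; try lia; split; move: o0 o1; rewrite !oddM; lia.
Qed.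

Lemma bigA m t P : permS m t -> good t -> nth 0 t 0 = P -> nth 0 t 1 = P.-1 -> 1 < P ->
  nth 0 t 3 = (if odd (nth 0 t 2) then (nth 0 t 2).+1 else (nth 0 t 2).-1) ->
  P + 4 <= top (nth 0 t 2) -> False.
Proof.
move=> ps [D nA nB] e0 e1 P1 pt2 H.
have sm : size t = m by case: ps.
have m2 : 2 < m.
  case: (ltnP 2 m) => // h; move: H.
  rewrite (nth_default 0 (_ : size t <= 2)); [rewrite /top /=; lia | lia].
have b2 := nth_bnd ps m2.
have inj p q : p < m -> q < m -> nth 0 t p = nth 0 t q -> p = q.
  by move=> pm qm; apply: nth_inj ps pm qm.
move: pt2 H; rewrite /top; case: (boolP (odd (nth 0 t 2))) => o2 e3 H.
- have [q qm hq] := val_in (v := P.+1) ps ltac:(lia).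
  have q0 := pos_ne (t:=t) (p:=q) (q:=0) ltac:(lia).
  have q1 := pos_ne (t:=t) (p:=q) (q:=1) ltac:(lia).
  have q2 := pos_ne (t:=t) (p:=q) (q:=2) ltac:(lia).
  have q3 := pos_ne (t:=t) (p:=q) (q:=3) ltac:(lia).
  apply: nA; exists 1, 2, 3, q; split; try lia; split; lia.
- have [q qm hq] := val_in (v := P.+1) ps ltac:(lia).
  have q0 := pos_ne (t:=t) (p:=q) (q:=0) ltac:(lia).
  have q1 := pos_ne (t:=t) (p:=q) (q:=1) ltac:(lia).
  have q2 := pos_ne (t:=t) (p:=q) (q:=2) ltac:(lia).
  have q3 := pos_ne (t:=t) (p:=q) (q:=3) ltac:(lia).
  have o3 : odd (nth 0 t 3) by rewrite e3; move: o2 H; rewrite !oddM; lia.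
  have d3 : nth 0 t 3 < nth 0 t 4 by apply: dumO => //; lia.
  have n24 : nth 0 t 2 != nth 0 t 4 by apply/eqP => /inj; lia.
  have q4 := pos_ne (t:=t) (p:=q) (q:=4) ltac:(lia).
  apply: nA; exists 1, 2, 4, q; split; try lia; split; lia.
Qed.

Lemma smallB m t P : permS m t -> good t -> nth 0 t 0 = P.-1 -> nth 0 t 1 = P -> 1 < P ->
  nth 0 t 3 = (if odd (nth 0 t 2) then (nth 0 t 2).+1 else (nth 0 t 2).-1) ->
  top (nth 0 t 2) + 4 <= P -> 3 < m -> False.
Proof.
move=> ps [D nA nB] e0 e1 P1 pt2 H m3.
have sm : size t = m by case: ps.
have b2 := nth_bnd (p:=2) ps ltac:(lia).
have b1 := nth_bnd (p:=1) ps ltac:(lia).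
have inj p q : p < m -> q < m -> nth 0 t p = nth 0 t q -> p = q.
  by move=> pm qm; apply: nth_inj ps pm qm.
move: pt2 H; rewrite /top; case: (boolP (odd (nth 0 t 2))) => o2 e3 H.
- have [q qm hq] := val_in (v := P.-2) ps ltac:(lia).
  have q0 := pos_ne (t:=t) (p:=q) (q:=0) ltac:(lia).
  have q1 := pos_ne (t:=t) (p:=q) (q:=1) ltac:(lia).
  have q2 := pos_ne (t:=t) (p:=q) (q:=2) ltac:(lia).
  have q3 := pos_ne (t:=t) (p:=q) (q:=3) ltac:(lia).
  have o3 : ~~ odd (nth 0 t 3) by rewrite e3 /= negbK.
  have [_ d3] : 4 < size t /\ nth 0 t 4 < nth 0 t 3 by apply: dumE => //; lia.
  have n24 : nth 0 t 2 != nth 0 t 4 by apply/eqP => /inj; lia.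
  have q4 := pos_ne (t:=t) (p:=q) (q:=4) ltac:(lia).
  apply: nB; exists 1, 3, 4, q; split; try lia; split; lia.
- have [q qm hq] := val_in (v := P.-2) ps ltac:(lia).
  have q0 := pos_ne (t:=t) (p:=q) (q:=0) ltac:(lia).
  have q1 := pos_ne (t:=t) (p:=q) (q:=1) ltac:(lia).
  have q2 := pos_ne (t:=t) (p:=q) (q:=2) ltac:(lia).
  have q3 := pos_ne (t:=t) (p:=q) (q:=3) ltac:(lia).
  apply: nB; exists 1, 2, 3, q; split; try lia; split; lia.
Qed.

Lemma top_bnd k : k <= top k <= k.+1.
Proof. rewrite /top; case: ifP => _; lia. Qed.

Lemma L2 m t : permS m t -> 3 < m -> good t -> partner t ->
  nth 0 t 3 = (if odd (nth 0 t 2) then (nth 0 t 2).+1 else (nth 0 t 2).-1) ->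
  (top (nth 0 t 2) = (top (nth 0 t 0)).+2 /\ ~~ odd (nth 0 t 0)) \/
  ((top (nth 0 t 2)).+2 = top (nth 0 t 0) /\ odd (nth 0 t 0)).
Proof.
move=> ps m3 G pt pt2.
have sm : size t = m by case: ps.
have b0 := nth_bnd (p:=0) ps ltac:(lia).
have b2 := nth_bnd (p:=2) ps ltac:(lia).
have n02 : nth 0 t 0 != nth 0 t 2 by apply/eqP => /(nth_inj ps); lia.
have n12 : nth 0 t 1 != nth 0 t 2 by apply/eqP => /(nth_inj ps); lia.
have tz := top_bnd (nth 0 t 2).
have ez := top_even (nth 0 t 2); rewrite oddM in ez.
case: G => D nA nB.
move: pt; rewrite /partner; case: (boolP (odd (nth 0 t 0))) => o0 e1.
- have tx : top (nth 0 t 0) = (nth 0 t 0).+1 by rewrite /top o0.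
  rewrite tx; right; split => //.
  have [_ d1] : 2 < size t /\ nth 0 t 2 < nth 0 t 1 by apply: dumE => //; [lia | rewrite e1 /= o0].
  have [h|h] := leqP (top (nth 0 t 2) + 4) (nth 0 t 0).+1.
    by exfalso; apply: (smallB ps (And3 D nA nB) _ e1 _ pt2 h m3); lia.
  move: o0; rewrite oddM; lia.
- have tx : top (nth 0 t 0) = nth 0 t 0 by rewrite /top (negbTE o0).
  rewrite tx; left; split => //.
  have d1 : nth 0 t 1 < nth 0 t 2 by apply: dumO => //; [lia | rewrite e1; move: o0 b0; rewrite !oddM; lia].
  have [h|h] := leqP (nth 0 t 0 + 4) (top (nth 0 t 2)).
    by exfalso; apply: (bigA ps (And3 D nA nB) _ e1 _ pt2 h); move: o0; rewrite ?oddM; lia.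
  move: o0; rewrite oddM; lia.
Qed.

Lemma decomp m t : permS m.+2 t -> partner t ->
  t = nth 0 t 0 :: nth 0 t 1 :: map (sh (top (nth 0 t 0))) (map (ush (top (nth 0 t 0))) (drop 2 t))
  /\ pc (nth 0 t 0) (nth 0 t 1) (top (nth 0 t 0)).
Proof.
move=> ps pt.
case: ps => u st B.
case: t st u B pt => [|x [|y r]] //= [sr] /andP [xr /andP [yr ur]] B.
rewrite /partner /= => pt.
have hx : 0 < x by have := B x (mem_head _ _); lia.
have hpc : pc x y (top x) by rewrite /pc /top; move: pt; case: ifP => o ->; apply/orP; [left|right]; lia.
split => //; do 2 f_equal.
rewrite drop0 -map_comp map_id_in // => z zr /=.
have zx : z != x by move: xr; rewrite inE negb_or => /andP [_] /memPn; apply.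
have zy : z != y by move/memPn: yr; apply.
have tb := top_bnd x.
apply: sh_ush; move: hpc; rewrite /pc; lia.
Qed.

Lemma partner_sh x y P s : ~~ odd P -> 1 < size s -> partner s -> 0 < nth 0 s 0 ->
  nth 0 (x :: y :: map (sh P) s) 3 = (if odd (nth 0 (x :: y :: map (sh P) s) 2)
    then (nth 0 (x :: y :: map (sh P) s) 2).+1 else (nth 0 (x :: y :: map (sh P) s) 2).-1).
Proof.
move=> Pe s1 pt hb.
have e2 : nth 0 (x :: y :: map (sh P) s) 2 = sh P (nth 0 s 0) by rewrite nth_sh //; lia.
have e3 : nth 0 (x :: y :: map (sh P) s) 3 = sh P (nth 0 s 1) by rewrite nth_sh //; lia.
rewrite e2 e3 odd_sh; move: pt; rewrite /partner.
have c1 := sh_cases P (nth 0 s 0); have c2 := sh_cases P (nth 0 s 1).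
move: Pe; rewrite !oddM; case: ifP => o e; lia.
Qed.

Lemma topS2 k : top k.+2 = (top k).+2.
Proof. by rewrite /top /= negbK; case: ifP. Qed.

Lemma main n t : permS (n.+1).*2 t -> (good t <-> t \in L n.+1).
Proof.
elim: n t => [|n IH] t.
  case=> u st B; case: t st u B => [|a [|b [|]]] // _ /= /andP [ab _] B.
  rewrite inE; split.
  - case=> D _ _.
    have := D 1 isT; rewrite /=.
    have ha := B a (mem_head _ _); have hb : 0 < b <= 2 by apply: B; rewrite !inE eqxx orbT.
    move: ab; rewrite inE => ab.
    rewrite oddM; case: ifP => h1 h2; apply/eqP; congr (_ :: _ :: _); lia.
  - move/eqP => ->; split.
    + by move=> [|[|i]].
    + by case=> a' [b'] [c'] [d'] [] /=; lia.
    + by case=> a' [b'] [c'] [d'] [] /=; lia.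
move=> ps; split.
- move=> G.
  have m3 : 3 < (n.+2).*2 by lia.
  have pt := L1 ps m3 G.
  have ps' : permS ((n.+1).*2).+2 t by rewrite -doubleS.
  have [et hpc] := decomp ps' pt.
  have L2t := L2 ps m3 G pt.
  move: pt L2t; rewrite /partner.
  set x := nth 0 t 0 in et hpc *; set y := nth 0 t 1 in et hpc *.
  set P := top x in et hpc *.
  set s := map (ush P) (drop 2 t) in et.
  move=> pt L2t.
  have pss : permS (n.+1).*2 s by apply: (permS_tail (x:=x) (y:=y) (P:=P) _ hpc); rewrite -et.
  have Gs : good s.
    case: G => D nA nB; rewrite et in D nA nB; split.
    + exact: dum_tail D.
    + by case=> a [b] [c] [d] H; apply: nA; exists a.+2, b.+2, c.+2, d.+2; apply: isA_tail.
    + by case=> a [b] [c] [d] H; apply: nB; exists a.+2, b.+2, c.+2, d.+2; apply: isB_tail.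
  have sL : s \in L n.+1 by apply/IH.
  have [_ pts] := L_prop sL.
  have Pe : ~~ odd P by rewrite /P top_even.
  have ss : size s = (n.+1).*2 by case: pss.
  have hb := nth_bnd (p:=0) pss isT.
  have pt2 := partner_sh (s:=s) x y Pe ltac:(lia) pts ltac:(lia).
  rewrite -et in pt2.
  have e2 : nth 0 t 2 = sh P (nth 0 s 0) by rewrite et nth_sh //; lia.
  have := L2t pt2; rewrite e2 => {L2t pt2}.
  have c1 := sh_cases P (nth 0 s 0).
  have tb1 := top_bnd (nth 0 s 0); have tb2 := top_bnd (nth 0 s 0).+2.
  have ts := topS2 (nth 0 s 0).
  move=> HL; rewrite L_S; apply: (proj2 (FL_mem _ _)); exists s => //.
  case: (boolP (odd x)) => ox.
  + have Px : P = x.+1 by rewrite /P /top ox.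
    rewrite ox in pt.
    case: HL => -[h1 h2]; first by rewrite ox in h2.
    right; rewrite (@extB_eq s P); last first.
      rewrite -nth0; case: c1 => -[c1 c2]; move: h1; rewrite c2 ?ts; lia.
    rewrite {1}et; congr (_ :: _ :: _); lia.
  + have Px : P = x by rewrite /P /top (negbTE ox).
    rewrite (negbTE ox) in pt.
    case: HL => -[h1 h2]; last by rewrite h2 in ox.
    left; rewrite /extA -nth0.
    have tg : top (nth 0 s 0) = P.
      case: c1 => -[c1 c2]; move: h1; rewrite c2 ?ts; lia.
    rewrite tg {1}et; congr (_ :: _ :: _); lia.
- rewrite L_S => /(proj1 (FL_mem _ _)) [s sL et].
  have [pss pts] := L_prop sL.
  have Gs : good s by apply/IH.
  case: et => ->; [exact: (goodA pss _ pts Gs) | exact: (goodB pss _ pts Gs)].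
Qed.

Lemma goodE m (s : {perm 'I_m}) :
  (dumont1 s && all (avoids s) [:: [:: 1; 3; 4; 2]; [:: 4; 2; 1; 3]]) <-> good (oneline s).
Proof.
rewrite /= /avoids andbT; split.
- case/and3P => D1 A1 B1; split.
  + exact/dumont1E.
  + by move/containsA => h; move: A1; rewrite h.
  + by move/containsB => h; move: B1; rewrite h.
- case=> D1 A1 B1; apply/and3P; split.
  + exact/dumont1E.
  + by apply/negP => /containsA.
  + by apply/negP => /containsB.
Qed.

Theorem theorem3p9 (n : nat) :
  1 <= n ->
  #|dumont1_avoiding n [:: [:: 1; 3; 4; 2]; [:: 4; 2; 1; 3]]| = 2 ^ n.-1.
Proof.
case: n => [|k] // _.
set A := dumont1_avoiding _ _.
rewrite cardE -(size_map (@oneline _)) /= -size_L.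
apply: perm_size; apply: uniq_perm.
- by rewrite (map_inj_uniq (@oneline_inj _)) enum_uniq.
- exact: uniq_L.
move=> t; apply/idP/idP.
- case/mapP => s; rewrite mem_enum /A inE => /goodE G ->.
  exact/(main (permS_oneline s)).
- move=> tL; have [ps _] := L_prop tL.
  have [s es] := oneline_surj ps.
  have G : good t by apply/(main ps).
  apply/mapP; exists s => //; rewrite mem_enum /A inE; apply/goodE; by rewrite es.
Qed.
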